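(* For every integer $d\ge2$, $$I_{1-\frac1d}\Big(\frac{d+1}{2},\frac12\Big)\ge\frac{1}{8\sqrt{6\pi}},$$ where $I_x(a,b)=B_x(a,b)/B(a,b)$ is the regularized incomplete beta function, $B_x(a,b)=\int_0^xt^{a-1}(1-t)^{b-1}dt$ and $B(a,b)=B_1(a,b)$. *)

(* Defs.v *)
From Stdlib Require Import Reals.
Open Scope R_scope.

(* Integrand of the beta function: t^(a-1) (1-t)^(b-1) on the open interval
   (0,1); set to 0 elsewhere (endpoints do not affect Riemann integrals). *)
Definition beta_integrand (a b t : R) : R :=
  if Rlt_dec 0 t then
    if Rlt_dec t 1 then Rpower t (a - 1) * Rpower (1 - t) (b - 1) else 0
  else 0.

Definition RInt_val (f : R -> R) (lo hi v : R) : Prop :=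
  exists pr : Riemann_integrable f lo hi, RiemannInt pr = v.

Definition incomplete_beta (a b x v : R) : Prop :=
  RInt_val (beta_integrand a b) 0 x v.

Definition complete_beta (a b B : R) : Prop :=
  forall eps, 0 < eps -> exists delta, 0 < delta /\
    forall y, 1 - delta < y < 1 ->
      exists v, incomplete_beta a b y v /\ Rabs (v - B) < eps.

(* Main.v *)
From Stdlib Require Import Reals Lra Lia Psatz Classical.
Require Import Defs.
From Coquelicot Require Import Coquelicot.
Open Scope R_scope.

Ltac nz := first [lra | apply Rgt_not_eq; lra | apply Rlt_not_eq; lra].

Definition g (n : nat) (t : R) := sqrt t ^ n / sqrt (1 - t).

Lemma g_cont n t : t < 1 -> continuous (g n) t.
Proof.
intros Ht. unfold g, Rdiv.
apply (continuous_mult (fun t => sqrt t ^ n) (fun t => / sqrt (1 - t))).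
- apply (continuous_comp sqrt (fun u => u ^ n)). apply continuous_sqrt.
  apply (ex_derive_continuous (fun u => u ^ n)). auto_derive. auto.
- apply (ex_derive_continuous (fun t => / sqrt (1 - t))). auto_derive.
  split; [lra| split; [apply Rgt_not_eq, sqrt_lt_R0; lra | auto]].
Qed.

Lemma g_nonneg n t : t < 1 -> 0 <= g n t.
Proof.
intros Ht. unfold g, Rdiv. apply Rmult_le_pos.
apply pow_le, sqrt_pos. left; apply Rinv_0_lt_compat, sqrt_lt_R0; lra.
Qed.

Lemma g_ex n a b : a <= b < 1 -> ex_RInt (g n) a b.
Proof.
intros H. apply (ex_RInt_continuous (V:=R_CompleteNormedModule)). intros z Hz.
rewrite Rmin_left in Hz by lra. rewrite Rmax_right in Hz by lra.
apply g_cont; lra.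
Qed.

Lemma pow_le1 x n : 0 <= x <= 1 -> x ^ n <= 1.
Proof. intros H. rewrite <- (pow1 n). apply pow_incr. lra. Qed.

Lemma pow_decr x k n : 0 <= x <= 1 -> (k <= n)%nat -> x ^ n <= x ^ k.
Proof.
intros H Hk. replace n with (k + (n - k))%nat by lia. rewrite pow_add.
pose proof (pow_le1 x (n - k) H). pose proof (pow_le x k (proj1 H)). nra.
Qed.

Lemma sqrt_pow2m t m : 0 <= t -> sqrt t ^ (2 * m) = t ^ m.
Proof. intros H. rewrite pow_mult, pow2_sqrt; auto. Qed.

Lemma bern u M : 0 <= u <= 1 -> 1 - INR M * u <= (1 - u) ^ M.
Proof.
intros H. induction M as [|M IH].
- simpl. lra.
- rewrite S_INR. simpl.
  assert (0 <= (1 - u) ^ M) by (apply pow_le; lra).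
  assert (0 <= INR M) by apply pos_INR.
  destruct (Rle_dec 0 (1 - INR M * u)); nra.
Qed.

Lemma parity d : (2 <= d)%nat -> exists M m : nat,
  (d - 1 <= 2 * M)%nat /\ 2 * INR M <= INR d /\ (2 * m <= d - 1)%nat /\ INR d <= 2 * (INR m + 1).
Proof.
intros Hd. destruct (Nat.Even_or_Odd d) as [[k Hk]|[k Hk]]; subst d.
- exists k, (k - 1)%nat. rewrite mult_INR, minus_INR by lia. simpl. repeat split; try lia; lra.
- exists k, k. rewrite plus_INR, mult_INR. simpl. repeat split; try lia; lra.
Qed.

Lemma beta_eq d t : (1 <= d)%nat -> 0 < t < 1 ->
  beta_integrand ((INR d + 1) / 2) (1 / 2) t = g (d - 1) t.
Proof.
intros Hd Ht. unfold beta_integrand, g.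
destruct (Rlt_dec 0 t); [|lra]. destruct (Rlt_dec t 1); [|lra].
replace ((INR d + 1) / 2 - 1) with (/ 2 * INR (d - 1)) by (rewrite minus_INR by lia; simpl; field).
replace (1 / 2 - 1) with (- / 2) by field.
rewrite <- Rpower_mult, Rpower_sqrt, Rpower_pow by (try apply sqrt_lt_R0; lra).
rewrite Rpower_Ropp, Rpower_sqrt by lra. reflexivity.
Qed.

Lemma incomplete d y : (2 <= d)%nat -> 0 < y < 1 ->
  incomplete_beta ((INR d + 1) / 2) (1 / 2) y (RInt (g (d - 1)) 0 y).
Proof.
intros Hd Hy. unfold incomplete_beta, RInt_val.
assert (E : ex_RInt (beta_integrand ((INR d + 1) / 2) (1 / 2)) 0 y).
{ apply ex_RInt_ext with (g (d - 1)).
  - intros x Hx. rewrite Rmin_left in Hx by lra. rewrite Rmax_right in Hx by lra.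
    symmetry; apply beta_eq; [lia|lra].
  - apply g_ex; lra. }
exists (ex_RInt_Reals_0 _ _ _ E). rewrite <- RInt_Reals.
apply RInt_ext. intros x Hx. rewrite Rmin_left in Hx by lra. rewrite Rmax_right in Hx by lra.
apply beta_eq; [lia|lra].
Qed.

Lemma F_mono n y1 y2 : 0 <= y1 <= y2 -> y2 < 1 -> RInt (g n) 0 y1 <= RInt (g n) 0 y2.
Proof.
intros H1 H2. rewrite <- (RInt_Chasles (g n) 0 y1 y2) by (apply g_ex; lra).
assert (0 <= RInt (g n) y1 y2).
{ apply RInt_ge_0; [lra| apply g_ex; lra | intros; apply g_nonneg; lra]. }
unfold plus; simpl. lra.
Qed.

Lemma upper_a d m z : (2 <= d)%nat -> (2 * m <= d - 1)%nat -> INR d <= 2 * (INR m + 1) ->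
  0 <= z <= 1 - 1 / INR d -> RInt (g (d - 1)) 0 z <= 2 / sqrt (INR d).
Proof.
intros Hd Hm Hm2 Hz.
assert (D2 : 2 <= INR d) by (apply (le_INR 2); lia).
set (s := sqrt (INR d)).
assert (Hs : 0 < s) by (apply sqrt_lt_R0; lra).
assert (Hss : s * s = INR d) by (apply sqrt_sqrt; lra).
assert (Hid : 0 < 1 / INR d) by (apply Rdiv_lt_0_compat; lra).
assert (Hint : is_RInt (fun t => s * t ^ m) 0 z
          (minus (s * z ^ (S m) / (INR m + 1)) (s * 0 ^ (S m) / (INR m + 1)))).
{ apply (is_RInt_derive (fun t => s * t ^ (S m) / (INR m + 1))).
  - intros x _. assert (0 <= INR m) by apply pos_INR. auto_derive. lra.
    replace (match m with | 0%nat => 1 | S _ => INR m + 1 end) with (INR m + 1) by (destruct m; simpl; ring). field. lra.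
  - intros x _. apply (ex_derive_continuous (fun t => s * t ^ m)). auto_derive. auto. }
assert (Hle : RInt (g (d - 1)) 0 z <= RInt (fun t => s * t ^ m) 0 z).
{ apply RInt_le; [lra | apply g_ex; lra | eexists; exact Hint |].
  intros t Ht. unfold g.
  assert (A1 : sqrt t ^ (d - 1) <= t ^ m).
  { rewrite <- (sqrt_pow2m t m) by lra. apply pow_decr; [|lia].
    split; [apply sqrt_pos|]. rewrite <- sqrt_1. apply sqrt_le_1_alt. lra. }
  assert (A0 : 0 <= sqrt t ^ (d - 1)) by (apply pow_le, sqrt_pos).
  assert (Q : 1 <= sqrt (1 - t) * s).
  { unfold s. rewrite <- sqrt_mult_alt by lra. rewrite <- sqrt_1 at 1. apply sqrt_le_1_alt.
    assert (1 - t >= 1 / INR d) by lra.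
    apply Rge_le in H. apply Rmult_le_compat_r with (r := INR d) in H; [|lra].
    replace (1 / INR d * INR d) with 1 in H by (field; nz). lra. }
  assert (Q0 : 0 < sqrt (1 - t)) by (apply sqrt_lt_R0; lra).
  apply Rmult_le_reg_r with (sqrt (1 - t)); auto.
  unfold Rdiv. rewrite Rmult_assoc, Rinv_l by lra. rewrite Rmult_1_r.
  assert (0 <= t ^ m) by (apply pow_le; lra). nra. }
rewrite (is_RInt_unique _ _ _ _ Hint) in Hle.
unfold minus, plus, opp in Hle; simpl in Hle.
assert (zp : z ^ m * z <= 1).
{ rewrite Rmult_comm. change (z * z ^ m) with (z ^ S m).
  apply pow_le1. split; [lra|]. assert (0 < 1 / INR d) by (apply Rdiv_lt_0_compat; lra). lra. }
assert (zp0 : 0 <= z ^ m * z) by (assert (0 <= z ^ m) by (apply pow_le; lra); nra).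
assert (Hm0 : 0 <= INR m) by apply pos_INR.
apply Rle_trans with (1 := Hle).
apply Rle_trans with (s / (INR m + 1)).
- replace (s * (z * z ^ m) / (INR m + 1) + - (s * (0 * 0 ^ m) / (INR m + 1))) with
    (s * (z ^ m * z) / (INR m + 1)) by (field; nz).
  unfold Rdiv. apply Rmult_le_compat_r. left; apply Rinv_0_lt_compat; lra. nra.
- apply Rmult_le_reg_r with ((INR m + 1) * s); [nra|].
  replace (s / (INR m + 1) * ((INR m + 1) * s)) with (s*s) by (field; nz). replace (2 / s * ((INR m + 1) * s)) with (2*(INR m+1)) by (field; nz). lra.
Qed.

Lemma upper_b d y : (2 <= d)%nat -> 1 - 1 / INR d <= y < 1 ->
  RInt (g (d - 1)) (1 - 1 / INR d) y <= 2 / sqrt (INR d).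
Proof.
intros Hd Hy.
assert (D2 : 2 <= INR d) by (apply (le_INR 2); lia).
set (s := sqrt (INR d)).
assert (Hs : 0 < s) by (apply sqrt_lt_R0; lra).
assert (Hid : 0 < 1 / INR d) by (apply Rdiv_lt_0_compat; lra).
set (t0 := 1 - 1 / INR d) in *.
assert (Hint : is_RInt (fun t => / sqrt (1 - t)) t0 y
          (minus (-2 * sqrt (1 - y)) (-2 * sqrt (1 - t0)))).
{ apply (is_RInt_derive (fun t => -2 * sqrt (1 - t))).
  - intros x Hx. rewrite Rmin_left in Hx by lra. rewrite Rmax_right in Hx by lra.
    auto_derive. lra.
    assert (0 < sqrt (1 - x)) by (apply sqrt_lt_R0; lra). replace (1 + - x) with (1 - x) by ring. field. nz.
  - intros x Hx. rewrite Rmin_left in Hx by lra. rewrite Rmax_right in Hx by lra.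
    apply (ex_derive_continuous (fun t => / sqrt (1 - t))). auto_derive.
    split; [lra| split; [apply Rgt_not_eq, sqrt_lt_R0; lra | auto]]. }
assert (Hle : RInt (g (d - 1)) t0 y <= RInt (fun t => / sqrt (1 - t)) t0 y).
{ apply RInt_le; [lra | apply g_ex; lra | eexists; exact Hint |].
  intros t Ht. unfold g.
  assert (A1 : sqrt t ^ (d - 1) <= 1).
  { apply pow_le1. split; [apply sqrt_pos|]. rewrite <- sqrt_1. apply sqrt_le_1_alt. lra. }
  assert (Q0 : 0 < / sqrt (1 - t)) by (apply Rinv_0_lt_compat, sqrt_lt_R0; lra).
  unfold Rdiv. nra. }
rewrite (is_RInt_unique _ _ _ _ Hint) in Hle.
unfold minus, plus, opp in Hle; simpl in Hle.
assert (E : sqrt (1 - t0) * s = 1).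
{ unfold s. rewrite <- sqrt_mult_alt by lra. replace ((1 - t0) * INR d) with 1. apply sqrt_1. unfold t0; field; nz. }
assert (0 <= sqrt (1 - y)) by apply sqrt_pos.
apply Rmult_le_reg_r with s; auto.
replace (2 / s * s) with 2 by (field; nz). nra.
Qed.

Lemma upper d y : (2 <= d)%nat -> 0 <= y < 1 -> RInt (g (d - 1)) 0 y <= 4 / sqrt (INR d).
Proof.
intros Hd Hy.
destruct (parity d Hd) as (M & m & _ & _ & Hm & Hm2).
assert (D2 : 2 <= INR d) by (apply (le_INR 2); lia).
assert (Hid : 0 < 1 / INR d) by (apply Rdiv_lt_0_compat; lra).
assert (1 / INR d <= 1 / 2) by (apply Rmult_le_compat_l; [lra|]; apply Rinv_le_contravar; lra).
assert (Hs : 0 < sqrt (INR d)) by (apply sqrt_lt_R0; lra).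
assert (Q : 2 / sqrt (INR d) <= 4 / sqrt (INR d)).
{ unfold Rdiv. assert (0 < / sqrt (INR d)) by (apply Rinv_0_lt_compat; lra). nra. }
destruct (Rle_dec y (1 - 1 / INR d)).
- eapply Rle_trans; [apply (upper_a d m); auto; lra | auto].
- rewrite <- (RInt_Chasles (g (d - 1)) 0 (1 - 1 / INR d) y) by (apply g_ex; lra).
  pose proof (upper_a d m (1 - 1 / INR d) Hd Hm Hm2 ltac:(lra)).
  pose proof (upper_b d y Hd ltac:(lra)).
  unfold plus; simpl. unfold Rdiv in *. lra.
Qed.

Lemma lower d : (2 <= d)%nat ->
  / sqrt (2 / INR d) / (4 * INR d) <= RInt (g (d - 1)) 0 (1 - 1 / INR d).
Proof.
intros Hd.
destruct (parity d Hd) as (M & m & HM & HM2 & _ & _).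
assert (D2 : 2 <= INR d) by (apply (le_INR 2); lia).
set (D := INR d) in *.
assert (Hid : 0 < 1 / D) by (apply Rdiv_lt_0_compat; lra).
assert (H2d : 2 / D <= 1).
{ apply Rmult_le_reg_r with D; [lra|]. replace (2 / D * D) with 2 by (field; nz). lra. }
set (x0 := 1 - 2 / D). set (x := 1 - 1 / D).
assert (Ex : x - x0 = 1 / D) by (unfold x, x0; field; nz).
assert (Hx0 : 0 <= x0) by (unfold x0; lra).
assert (Hx : x < 1) by (unfold x; lra).
assert (P2 : 0 < 2 / D) by (apply Rdiv_lt_0_compat; lra).
set (c := / sqrt (2 / D)).
assert (Hc : 0 < c) by (apply Rinv_0_lt_compat, sqrt_lt_R0; lra).
assert (Hint : is_RInt (fun t => c * (1 - D * (1 - t) / 2)) x0 x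
          (minus (c * (x + D * (1 - x) ^ 2 / 4)) (c * (x0 + D * (1 - x0) ^ 2 / 4)))).
{ apply (is_RInt_derive (fun t => c * (t + D * (1 - t) ^ 2 / 4))).
  - intros y _. auto_derive. auto. field.
  - intros y _. apply (ex_derive_continuous (fun t => c * (1 - D * (1 - t) / 2))). auto_derive. auto. }
assert (Hle : RInt (fun t => c * (1 - D * (1 - t) / 2)) x0 x <= RInt (g (d - 1)) x0 x).
{ apply RInt_le; [lra | eexists; exact Hint | apply g_ex; lra |].
  intros t Ht. unfold g.
  assert (Ht0 : 0 < t) by lra.
  assert (A1 : 1 - D * (1 - t) / 2 <= sqrt t ^ (d - 1)).
  { apply Rle_trans with (t ^ M).
    - replace t with (1 - (1 - t)) at 2 by ring.
      eapply Rle_trans; [|apply bern; lra].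
      assert (0 <= 1 - t) by lra. nra.
    - rewrite <- (sqrt_pow2m t M) by lra. apply pow_decr; [|lia].
      split; [apply sqrt_pos|]. rewrite <- sqrt_1. apply sqrt_le_1_alt. lra. }
  assert (B0 : 0 <= 1 - D * (1 - t) / 2).
  { assert (D * (1 - t) <= D * (2 / D)) by (apply Rmult_le_compat_l; unfold x0 in Ht; lra).
    replace (D * (2 / D)) with 2 in H by (field; nz). lra. }
  assert (Q : c <= / sqrt (1 - t)).
  { apply Rinv_le_contravar. apply sqrt_lt_R0; lra. apply sqrt_le_1_alt. unfold x0 in Ht. lra. }
  unfold Rdiv at 2. nra. }
rewrite (is_RInt_unique _ _ _ _ Hint) in Hle.
unfold minus, plus, opp in Hle; simpl in Hle.
rewrite <- (RInt_Chasles (g (d - 1)) 0 x0 x) by (apply g_ex; lra).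
assert (0 <= RInt (g (d - 1)) 0 x0).
{ apply RInt_ge_0; [lra| apply g_ex; lra | intros; apply g_nonneg; lra]. }
unfold plus; simpl.
assert (V : c * (x + D * ((1 - x) * ((1 - x) * 1)) / 4) + - (c * (x0 + D * ((1 - x0) * ((1 - x0) * 1)) / 4)) = c / (4 * D)) by (unfold x, x0; field; nz).
lra.
Qed.

Theorem mainTheorem7 : forall d : nat, (2 <= d)%nat ->
  exists Bx B : R,
    incomplete_beta ((INR d + 1) / 2) (1 / 2) (1 - 1 / INR d) Bx /\
    complete_beta ((INR d + 1) / 2) (1 / 2) B /\
    Bx / B >= 1 / (8 * sqrt (6 * PI)).
Proof.
intros d Hd.
assert (D2 : 2 <= INR d) by (apply (le_INR 2); lia).
assert (Hid : 0 < 1 / INR d) by (apply Rdiv_lt_0_compat; lra).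
assert (1 / INR d <= 1 / 2) by (apply Rmult_le_compat_l; [lra|]; apply Rinv_le_contravar; lra).
set (F := fun y => RInt (g (d - 1)) 0 y).
set (E := fun v => exists y, 0 <= y < 1 /\ v = F y).
set (s := sqrt (INR d)).
assert (Hs : 0 < s) by (apply sqrt_lt_R0; lra).
assert (Hb : bound E).
{ exists (4 / s). intros v [y [Hy ->]]. apply upper; auto. }
assert (HE : E (F (1 - 1 / INR d))) by (exists (1 - 1 / INR d); split; [lra|auto]).
destruct (completeness E Hb (ex_intro _ _ HE)) as [B [HBub HBlub]].
exists (F (1 - 1 / INR d)), B. split; [|split].
- apply incomplete; auto; lra.
- intros eps Heps.
  destruct (classic (exists y0, 0 <= y0 < 1 /\ B - eps < F y0)) as [[y0 [Hy0 Hlt]]|Hno].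
  + exists (1 - y0). split; [lra|]. intros y Hy.
    exists (F y). split. apply incomplete; auto; lra.
    assert (F y <= B) by (apply HBub; exists y; split; [lra|auto]).
    assert (F y0 <= F y) by (apply F_mono; lra).
    apply Rabs_def1; lra.
  + exfalso. assert (B <= B - eps); [|lra].
    apply HBlub. intros v [y [Hy ->]].
    destruct (Rle_dec (F y) (B - eps)); auto. exfalso; apply Hno; exists y; split; auto; lra.
- assert (HBU : B <= 4 / s) by (apply HBlub; intros v [y [Hy ->]]; apply upper; auto).
  assert (HL := lower d Hd). fold s in HBU. change (RInt (g (d - 1)) 0 (1 - 1 / INR d)) with (F (1 - 1 / INR d)) in HL.
  assert (HBx : F (1 - 1 / INR d) <= B) by (apply HBub; exact HE).
  set (p := sqrt (2 / INR d)) in *.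
  assert (Hp : 0 < p) by (apply sqrt_lt_R0; apply Rdiv_lt_0_compat; lra).
  assert (Hps : p * s = sqrt 2).
  { unfold p, s. rewrite <- sqrt_mult_alt by (left; apply Rdiv_lt_0_compat; lra). f_equal. field. nz. }
  assert (H2 : sqrt 2 * sqrt 2 = 2) by (apply sqrt_sqrt; lra).
  set (q := sqrt (6 * PI)).
  assert (Hq : q * q = 6 * PI) by (apply sqrt_sqrt; pose proof PI_RGT_0; lra).
  assert (Hq0 : 0 < q) by (apply sqrt_lt_R0; pose proof PI_RGT_0; lra).
  assert (Hpi : 3 < PI) by (pose proof PI2_3_2; lra).
  set (Bx := F (1 - 1 / INR d)) in *.
  set (D := INR d) in *.
  assert (Hss : s * s = D) by (apply sqrt_sqrt; lra).
  assert (HL0 : 0 < / p / (4 * D)).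
  { apply Rdiv_lt_0_compat; [apply Rinv_0_lt_compat|]; lra. }
  assert (HB0 : 0 < B) by lra.
  assert (HiB : s / 4 <= / B).
  { replace (s / 4) with (/ (4 / s)) by (field; nz). apply Rinv_le_contravar; auto. }
  assert (S1 : Bx * (s / 4) <= Bx / B).
  { unfold Rdiv at 2. apply Rmult_le_compat_l; lra. }
  assert (S2 : / p / (4 * D) * (s / 4) <= Bx * (s / 4)).
  { apply Rmult_le_compat_r; lra. }
  assert (S3 : / p / (4 * D) * (s / 4) = / (16 * sqrt 2)).
  { rewrite <- Hps, <- Hss. field. split; nz. }
  assert (Hr : 0 < sqrt 2) by (apply sqrt_lt_R0; lra).
  assert (S4 : 2 * sqrt 2 <= q) by nra.
  assert (S5 : 1 / (8 * q) <= / (16 * sqrt 2)).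
  { unfold Rdiv. rewrite Rmult_1_l. apply Rinv_le_contravar; nra. }
  apply Rle_ge. lra.
Qed.
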